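(* Let $N\ge1$, $m>1$, $\alpha,\beta\in\mathbb R$ with $N+\alpha-m>0$ and $\beta-\alpha+1>0$; let $s_0\ge0$, $\lambda>0$, $\wp>m-1$, and let $u$ be a positive solution of $$-(r^{N+\alpha-1}|u'(r)|^{m-2}u'(r))'=\lambda r^{N+\beta-1}u^{\wp}(r),\ r\in(s_0,\infty),\qquad u(s_0)=1,\quad u'(s_0)\le0.$$ Let $\varrho=\frac{N+\alpha-m}{m-1}$ and $U_\varrho(r)=ru'(r)+\varrho u(r)$. Then there are positive constants $C_1,C_2$ depending only on $N,\alpha,\beta,\lambda,\wp,m$ such that for all $r\in(s_0,\infty)$ $$r^{N+\beta}u^{\wp+1}(r)\le\begin{cases} C_1\, r^{-\frac{m(N+\beta)-(N+\alpha-m)(\wp+1)}{\wp-m+1}} & \text{if } N+\beta\ne\varrho\wp,\\ C_2\, r^{-\frac{(N+\alpha-m)(\wp+1)-(m-1)(N+\beta)}{m-1}} & \text{if } N+\beta=\varrho\wp.\end{cases}$$ Moreover, for all $r\in(s_0,\infty)$, $$\lambda\Big(\frac{N+\beta}{\wp+1}-\frac{N+\alpha-m}{m}\Big)\int_{s_0}^r s^{N+\beta-1}u^{\wp+1}(s)\,ds = -\frac{m-1}{m}r^{N+\alpha-1}|u'(r)|^{m-1}U_\varrho(r)+\frac{m-1}{m}s_0^{N+\alpha-1}|u'(s_0)|^{m-1}U_\varrho(s_0)+\frac{\lambda}{\wp+1}\big[r^{N+\beta}u^{\wp+1}(r)-s_0^{N+\beta}\big].$$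
   Context: A positive solution is a positive function $u\in C^1$ on $[s_0,\infty)$ satisfying the differential equation on $(s_0,\infty)$ (in the sense that $r^{N+\alpha-1}|u'|^{m-2}u'$ is $C^1$ there) together with the initial conditions. *)

(* Defs.v *)
(* R : realType, powR for real powers (0 `^ x = 0 for x <> 0). *)
From HB Require Import structures.
From mathcomp Require Import all_boot all_order all_algebra.
From mathcomp Require Import all_classical all_reals all_analysis.
Set Implicit Arguments. Unset Strict Implicit. Unset Printing Implicit Defensive.
Import Order.TTheory GRing.Theory Num.Theory.
Import numFieldNormedType.Exports.
Local Open Scope classical_set_scope.
Local Open Scope ring_scope.

Definition flux {R : realType} (N : nat) (al m : R) (du : R -> R) : R -> R :=
  fun r => r `^ (N%:R + al - 1) * (`|du r| `^ (m - 2) * du r).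

Definition positive_solution {R : realType} (N : nat) (al be m lam p s0 : R)
    (u du : R -> R) : Prop :=
  (forall x, s0 <= x -> 0 < u x) /\
  (forall x, s0 < x -> is_derive x 1 u (du x)) /\
  (h^-1 * (u (s0 + h) - u s0) @[h --> 0^'+] --> du s0) /\
  {within `[s0, +oo[, continuous du} /\
  (forall r, s0 < r ->
     is_derive r 1 (flux N al m du) (- (lam * r `^ (N%:R + be - 1) * u r `^ p))) /\
  {in `]s0, +oo[, continuous (derive1 (flux N al m du))} /\
  u s0 = 1 /\ du s0 <= 0.

(* Main.v *)
Require Import Defs.
From HB Require Import structures.
From mathcomp Require Import all_boot all_order all_algebra.
From mathcomp Require Import all_classical all_reals all_analysis.
From mathcomp Require Import measurable_realfun lebesgue_measure lebesgue_integral ftc.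
From mathcomp Require Import ring lra.
Set Implicit Arguments. Unset Strict Implicit. Unset Printing Implicit Defensive.
Import Order.TTheory GRing.Theory Num.Theory.
Import numFieldNormedType.Exports.
Local Open Scope classical_set_scope.
Local Open Scope ring_scope.



Section Helpers.
Context {R : realType}.

Lemma is_derive_comp1 (f g : R -> R) (x df dg : R) :
  is_derive x 1 f df -> is_derive (f x) 1 g dg -> is_derive x 1 (g \o f) (dg * df).
Proof.
move=> hf hg.
have df1 : derivable f x 1 by case: hf.
have dg1 : derivable g (f x) 1 by case: hg.
apply: DeriveDef.
  apply/derivable1_diffP; apply: differentiable_comp; exact/derivable1_diffP.
rewrite -derive1E derive1_comp // !derive1E !derive_val //.
Qed.

Lemma is_derive_powR_comp (g : R -> R) (dg x c : R) :
  is_derive x 1 g dg -> 0 < g x ->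
  is_derive x 1 (fun y => g y `^ c) (c * g x `^ (c - 1) * dg).
Proof.
move=> hg gx.
have := is_derive_comp1 hg (is_derive1_powR c gx).
by [].
Qed.

Lemma nonincr_deriv (f df : R -> R) (a b : R) : a <= b ->
  (forall x, a <= x <= b -> is_derive x 1 f (df x)) ->
  (forall x, a < x < b -> df x <= 0) -> f b <= f a.
Proof.
move=> ab hd hneg.
move: ab; rewrite le_eqVlt => /orP[/eqP -> //|altb].
have cf : {within `[a, b], continuous f}.
  apply: derivable_within_continuous => x; rewrite in_itv /= => xab.
  by case: (hd x xab).
have hd' : forall x, x \in `]a, b[ -> is_derive x 1 f (df x).
  by move=> x; rewrite in_itv /= => /andP[/ltW ax /ltW xb]; apply: hd; rewrite ax xb.
have [c cab E] := MVT altb hd' cf.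
rewrite -subr_le0 E; apply: mulr_le0_ge0; last by rewrite subr_ge0 ltW.
by apply: hneg; move: cab; rewrite in_itv.
Qed.

End Helpers.



Section Helpers2.
Context {R : realType}.

Lemma isdM (f g : R -> R) (x df dg : R) :
  is_derive x 1 f df -> is_derive x 1 g dg ->
  is_derive x 1 (fun y => f y * g y) (f x * dg + g x * df).
Proof. move=> hf hg; exact: (is_deriveM hf hg). Qed.

Lemma isdD (f g : R -> R) (x df dg : R) :
  is_derive x 1 f df -> is_derive x 1 g dg ->
  is_derive x 1 (fun y => f y + g y) (df + dg).
Proof. move=> hf hg; exact: (is_deriveD hf hg). Qed.

Lemma isdN (f : R -> R) (x df : R) :
  is_derive x 1 f df -> is_derive x 1 (fun y => - f y) (- df).
Proof. move=> hf; exact: (is_deriveN hf). Qed.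

Lemma isdC (c x : R) : is_derive x 1 (fun _ : R => c) 0.
Proof. exact: is_derive_cst. Qed.

Lemma isdId (x : R) : is_derive x 1 (fun y : R => y) 1.
Proof. exact: is_derive_id. Qed.

Lemma isdP (x c : R) : 0 < x -> is_derive x 1 (fun y : R => y `^ c) (c * x `^ (c - 1)).
Proof. move=> x0; exact: is_derive1_powR. Qed.

Lemma isd_ext (f g : R -> R) (x df dg : R) :
  is_derive x 1 f df -> f = g -> df = dg -> is_derive x 1 g dg.
Proof. by move=> h <- <-. Qed.

Lemma right_pick (f : R -> R) (a l e r : R) :
  f x @[x --> a^'+] --> l -> 0 < e -> a < r ->
  exists t, a < t /\ t < r /\ `|l - f t| < e.
Proof.
move=> /cvgrPdist_lt /(_ e) H e0 ar.
have H' := H e0.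
have H2 : \forall t \near a^'+, (a < t /\ t < r) /\ `|l - f t| < e.
  near=> t; split; last by near: t; exact: H'.
  split; [near: t; exact: nbhs_right_gt | near: t; exact: nbhs_right_lt].
have [t [[h1 h2] h3]] := filter_ex H2.
by exists t.
Unshelve. all: by end_near.
Qed.

End Helpers2.



Section PowR.
Context {R : realType}.
Implicit Types x y c d : R.

Lemma pD x c d : 0 < x -> x `^ (c + d) = x `^ c * x `^ d.
Proof. by move=> x0; rewrite powRD // (gt_eqF x0) implybT. Qed.

Lemma pB x c d : 0 < x -> x `^ (c - d) = x `^ c / x `^ d.
Proof. by move=> x0; rewrite pD // powRN. Qed.

Lemma pN x c : x `^ (- c) = (x `^ c)^-1.
Proof. exact: powRN. Qed.

Lemma pM x y c : 0 <= x -> 0 <= y -> (x * y) `^ c = x `^ c * y `^ c.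
Proof. exact: powRM. Qed.

Lemma pMM x c d : x `^ (c * d) = (x `^ c) `^ d.
Proof. exact: powRrM. Qed.

Lemma p1 x : 0 <= x -> x `^ 1 = x.
Proof. exact: powRr1. Qed.

Lemma pK x c : 0 <= x -> c != 0 -> (x `^ c) `^ (c^-1) = x.
Proof. by move=> x0 c0; rewrite -pMM mulfV // p1. Qed.

Lemma pKV x c : 0 <= x -> c != 0 -> (x `^ (c^-1)) `^ c = x.
Proof. by move=> x0 c0; rewrite -pMM mulVf // p1. Qed.

Lemma ple x y c : 0 <= c -> 0 <= x -> x <= y -> x `^ c <= y `^ c.
Proof.
move=> c0 x0 xy; apply: (ge0_ler_powR c0) => //; rewrite nnegrE //.
exact: le_trans xy.
Qed.

Lemma plt x y c : 0 < c -> 0 <= x -> x < y -> x `^ c < y `^ c.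
Proof.
move=> c0 x0 xy; apply: (gt0_ltr_powR c0) => //; rewrite nnegrE //.
exact: (le_trans x0 (ltW xy)).
Qed.

Lemma plen x y c : c <= 0 -> 0 < x -> x <= y -> y `^ c <= x `^ c.
Proof.
move=> c0 x0 xy.
have y0 : 0 < y by exact: lt_le_trans x0 xy.
have -> : c = - (- c) by rewrite opprK.
rewrite (pN y (- c)) (pN x (- c)) lef_pV2 ?posrE ?powR_gt0 //.
by apply: ple => //; [rewrite oppr_ge0 | exact: ltW].
Qed.

Lemma pge0 x c : 0 <= x `^ c. Proof. exact: powR_ge0. Qed.
Lemma pgt0 x c : 0 < x -> 0 < x `^ c. Proof. exact: powR_gt0. Qed.

Lemma p0 c : c != 0 -> 0 `^ c = 0 :> R. Proof. exact: powR0. Qed.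
Lemma pr0 x : x `^ 0 = 1. Proof. exact: powRr0. Qed.
Lemma p1x c : 1 `^ c = 1 :> R. Proof. by rewrite powR1. Qed.

Lemma spow_neg y q : 0 < q -> y <= 0 -> `|y| `^ (q - 1) * y = - (`|y| `^ q).
Proof.
move=> q0 y0; rewrite -{2}(opprK y) -(ler0_norm y0) mulrN mulrC.
by rewrite mulr_powRB1 //.
Qed.

Lemma spow_pos y q : 0 < q -> 0 <= y -> `|y| `^ (q - 1) * y = y `^ q.
Proof.
move=> q0 y0; rewrite (ger0_norm y0) mulrC mulr_powRB1 //.
Qed.

End PowR.



Section Helpers4.
Context {R : realType}.

Lemma at_right_epsP (f : R -> R) (a l : R) :
  f y @[y --> a^'+] --> l <->
  (forall e, 0 < e -> exists2 d, 0 < d & forall y, a < y -> y < a + d -> `|l - f y| < e).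
Proof.
split.
  move/cvgrPdist_lt => H e e0.
  have := H e e0; rewrite near_withinE => /nbhs_ballP [d /= d0 Hd].
  exists d => // y ay yd; apply: Hd => //.
  by rewrite /ball /= ltr_distlC; apply/andP; split; lra.
move=> H; apply/cvgrPdist_lt => e e0.
have [d d0 Hd] := H e e0.
rewrite near_withinE; apply/nbhs_ballP; exists d => //= y.
rewrite /ball /= ltr_distlC => /andP[_ yd] ay.
exact: Hd.
Qed.


Lemma eq_of_eps (a b : R) : (forall e, 0 < e -> `|a - b| < e) -> a = b.
Proof.
move=> H; apply/eqP; rewrite -subr_eq0 -normr_le0.
rewrite leNgt; apply/negP => h.
have := H _ h; lra.
Qed.

Lemma powR_rcont (g : R -> R) (a l c : R) : 0 < c -> 0 <= l ->
  g y @[y --> a^'+] --> l -> (forall y, a < y -> 0 <= g y) ->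
  (g y `^ c) @[y --> a^'+] --> l `^ c.
Proof.
move=> c0 l0 hg gpos.
move: l0; rewrite le_eqVlt => /orP[/eqP l0|l0].
  rewrite -l0 p0 ?lt0r_neq0 //.
  apply/at_right_epsP => e e0.
  move/at_right_epsP: hg => /(_ (e `^ (c^-1))) [|d d0 Hd].
    exact: pgt0.
  exists d => // y ay yd.
  have := Hd y ay yd; rewrite -l0 sub0r normrN ger0_norm ?gpos // => h1.
  rewrite sub0r normrN ger0_norm ?pge0 //.
  have := plt c0 (gpos y ay) h1.
  by rewrite pKV //; [exact: ltW | exact: lt0r_neq0].
have hc : {for l, continuous (fun x : R => x `^ c)}.
  have : derivable (fun x : R => x `^ c) l 1.
    by apply: derivable_powR; rewrite in_itv /= l0.
  by move/derivable1_diffP/differentiable_continuous.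
exact: (continuous_cvg _ hc hg).
Qed.


Lemma rcD (f g : R -> R) (x a b : R) :
  f y @[y --> x^'+] --> a -> g y @[y --> x^'+] --> b ->
  (f y + g y) @[y --> x^'+] --> a + b.
Proof. move=> hf hg; exact: cvgD. Qed.

Lemma rcM (f g : R -> R) (x a b : R) :
  f y @[y --> x^'+] --> a -> g y @[y --> x^'+] --> b ->
  (f y * g y) @[y --> x^'+] --> a * b.
Proof. move=> hf hg; exact: cvgM. Qed.

Lemma rcC (c x : R) : (fun _ : R => c) y @[y --> x^'+] --> c.
Proof. exact: cvg_cst. Qed.

Lemma rcId (x : R) : (fun y : R => y) y @[y --> x^'+] --> x.
Proof.
apply/at_right_epsP => e e0; exists e => // y xy ye.
rewrite ltr0_norm; lra.
Qed.

Lemma rcNorm (f : R -> R) (x a : R) :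
  f y @[y --> x^'+] --> a -> `|f y| @[y --> x^'+] --> `|a|.
Proof.
move/at_right_epsP => H; apply/at_right_epsP => e e0.
have [d d0 Hd] := H e e0; exists d => // y xy yd.
exact: le_lt_trans (ler_dist_dist _ _) (Hd y xy yd).
Qed.

Lemma test_rc (f : R -> R) (x : R) : f y @[y --> x^'+] --> f x ->
  (y * f y + 3 * f y) @[y --> x^'+] --> x * f x + 3 * f x.
Proof.
move=> hf.
apply: rcD; apply: rcM => //; [exact: rcId | exact: rcC].
Qed.
End Helpers4.



Ltac nz := repeat (apply/andP; split); apply: lt0r_neq0; first [assumption | lra | exact: pgt0].
Set Default Proof Using "All".
Section Params.
Context {R : realType} (N : nat) (al be m lam p : R).
Hypotheses (hN : (1 <= N)%N) (hm : 1 < m) (hA : 0 < N%:R + al - m)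
  (hB : 0 < be - al + 1) (hlam : 0 < lam) (hp : m - 1 < p).

Definition aa := N%:R + al - 1.
Definition qq := m - 1.
Definition nb := N%:R + be.

Lemma qq_gt0 : 0 < qq. Proof. rewrite /qq; move: hm; lra. Qed.
Lemma aa_gtq : qq < aa.
Proof. rewrite /aa /qq; move: hA; generalize (N%:R : R) => n; lra. Qed.
Lemma aa_gt0 : 0 < aa. Proof. have := aa_gtq; have := qq_gt0; lra. Qed.
Lemma nb_gta : aa < nb.
Proof. rewrite /aa /nb; move: hB; generalize (N%:R : R) => n; lra. Qed.
Lemma nb_gt0 : 0 < nb. Proof. have := nb_gta; have := aa_gt0; lra. Qed.
Lemma p_gtq : qq < p. Proof. rewrite /qq; move: hp; lra. Qed.
Lemma p_gt0 : 0 < p. Proof. have := p_gtq; have := qq_gt0; lra. Qed.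
Lemma lam_gt0 : 0 < lam. Proof. exact: hlam. Qed.
Lemma m_eq : m = qq + 1. Proof. rewrite /qq; lra. Qed.

Definition ee := 1 - aa / qq.
Lemma ee_lt0 : ee < 0.
Proof.
rewrite /ee subr_lt0 ltr_pdivlMr ?mul1r; [exact: aa_gtq | exact: qq_gt0].
Qed.
Definition mq := m / qq.
Lemma mq1 : mq - 1 = qq^-1.
Proof. have q0 := qq_gt0; rewrite /mq m_eq; field; exact: lt0r_neq0. Qed.
Lemma mq_gt0 : 0 < mq.
Proof. rewrite /mq divr_gt0 //; [move: hm; lra | exact: qq_gt0]. Qed.
Definition ka := aa / qq + (nb - 1).
Lemma ka_gt0 : 0 < ka.
Proof.
have h : 1 < aa / qq by rewrite ltr_pdivlMr ?mul1r; [exact: aa_gtq | exact: qq_gt0].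
rewrite /ka; have := nb_gt0; lra.
Qed.

Lemma half_pow (r c : R) : 0 <= r -> (r / 2) `^ c = r `^ c * 2 `^ (- c).
Proof.
move=> r0; rewrite pM ?invr_ge0 //.
by rewrite -powR_inv1 // -pMM mulN1r.
Qed.

Lemma two_pow_lt1 (c : R) : 0 < c -> 2 `^ (- c) < 1.
Proof.
move=> c0; rewrite pN invf_lt1; last exact: pgt0.
have h : 1 `^ c < 2 `^ c by apply: plt => //; lra.
by rewrite p1x in h.
Qed.

Definition kk := (p - qq) / qq.
Definition gg := (nb - aa) / qq.
Definition c3 := lam / nb * (1 - 2 `^ (- nb)).
Definition c4 := kk * c3 `^ (qq^-1) / (gg + 1) * (1 - 2 `^ (- (gg + 1))).
Definition th := (gg + 1) / kk.

Lemma kk_gt0 : 0 < kk.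
Proof. rewrite /kk divr_gt0 ?qq_gt0 //; have := p_gtq; lra. Qed.
Lemma gg_gt0 : 0 < gg.
Proof. rewrite /gg divr_gt0 ?qq_gt0 //; have := nb_gta; lra. Qed.
Lemma c3_gt0 : 0 < c3.
Proof.
rewrite /c3; apply: mulr_gt0; first by apply: divr_gt0; [exact: lam_gt0| exact: nb_gt0].
by rewrite subr_gt0; exact: two_pow_lt1 nb_gt0.
Qed.
Lemma c4_gt0 : 0 < c4.
Proof.
have g0 := gg_gt0.
rewrite /c4; apply: mulr_gt0.
  apply: divr_gt0; last lra.
  by apply: mulr_gt0; [exact: kk_gt0 | apply: pgt0; exact: c3_gt0].
rewrite subr_gt0; apply: two_pow_lt1; lra.
Qed.

Definition cE := (2 `^ ee - 4 `^ ee) / (- ee).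
Definition cA := lam / nb * (2^-1) `^ p * (2 `^ nb - (3 / 2) `^ nb).
Definition cB := lam * mq / (p + 1) * ((3 / 4) `^ (p + 1) - (2^-1) `^ (p + 1)).

Lemma cE_gt0 : 0 < cE.
Proof.
have e0 := ee_lt0.
rewrite /cE divr_gt0 ?oppr_gt0 // subr_gt0.
have h2 : 2 `^ ee < 1.
  have := @two_pow_lt1 (- ee); rewrite opprK; apply; lra.
have h20 : 0 < 2 `^ ee by apply: pgt0.
have -> : 4 = 2 * 2 :> R by rewrite -natrM.
rewrite pM //.
have : 2 `^ ee * 2 `^ ee < 2 `^ ee * 1 by rewrite ltr_pM2l.
lra.
Qed.

Lemma cA_gt0 : 0 < cA.
Proof.
rewrite /cA; apply: mulr_gt0.
  apply: mulr_gt0; first by apply: divr_gt0; [exact: lam_gt0 | exact: nb_gt0].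
  by apply: pgt0.
rewrite subr_gt0; apply: plt; [exact: nb_gt0 | lra | lra].
Qed.

Lemma cB_gt0 : 0 < cB.
Proof.
have p0 := p_gt0.
rewrite /cB; apply: mulr_gt0.
  apply: divr_gt0; last lra.
  by apply: mulr_gt0; [exact: lam_gt0 | exact: mq_gt0].
rewrite subr_gt0; apply: plt; lra.
Qed.

Definition rhoD := (N%:R + al - m) / (m - 1).
Lemma rho_eq : rhoD = (aa - qq) / qq.
Proof. by rewrite /rhoD /aa /qq; congr (_ / _); ring. Qed.
Definition cc := lam * (nb / (p + 1) - (aa - qq) / m).

Ltac facts := have := qq_gt0; have := aa_gtq; have := aa_gt0; have := nb_gta;
  have := nb_gt0; have := p_gtq; have := p_gt0; have := lam_gt0.

Section Sol.
Context (s0 : R) (u du : R -> R).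
Hypotheses (hs0 : 0 <= s0) (sol : positive_solution N al be m lam p s0 u du).

Let F := flux N al m du.

Lemma u_pos x : s0 <= x -> 0 < u x.
Proof. by case: sol => h _; exact: h. Qed.
Lemma du_der x : s0 < x -> is_derive x 1 u (du x).
Proof. by case: sol => _ [h _]; exact: h. Qed.
Lemma F_der x : s0 < x -> is_derive x 1 F (- (lam * x `^ (nb - 1) * u x `^ p)).
Proof. by case: sol => _ [_ [_ [_ [h _]]]]; exact: h. Qed.
Lemma u_s0 : u s0 = 1.
Proof. by case: sol => _ [_ [_ [_ [_ [_ [h _]]]]]]. Qed.
Lemma du_s0 : du s0 <= 0.
Proof. by case: sol => _ [_ [_ [_ [_ [_ [_ h]]]]]]. Qed.
Lemma dq_cvg : h^-1 * (u (s0 + h) - u s0) @[h --> 0^'+] --> du s0.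
Proof. by case: sol => _ [_ [h _]]. Qed.
Lemma du_cvg : du x @[x --> s0^'+] --> du s0.
Proof.
case: sol => _ [_ [_ [h _]]].
by have [] := (continuous_within_itvcyP s0 du).1 h.
Qed.

Lemma F_decr x y : s0 < x -> x < y -> F y < F x.
Proof.
move=> sx xy.
have cf : {within `[x, y], continuous F}.
  apply: derivable_within_continuous => z; rewrite in_itv /= => /andP[xz _].
  by case: (F_der (lt_le_trans sx xz)).
have hd : forall z, z \in `]x, y[ -> is_derive z 1 F (- (lam * z `^ (nb - 1) * u z `^ p)).
  by move=> z; rewrite in_itv /= => /andP[xz _]; apply: F_der; exact: lt_trans xz.
have [c cxy E] := MVT xy hd cf.
rewrite -subr_lt0 E pmulr_llt0 ?subr_gt0 //.
rewrite oppr_lt0; apply: mulr_gt0; first apply: mulr_gt0 => //.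
  apply: powR_gt0; move: (hs0) cxy; rewrite in_itv /= => ? /andP[xc _]; lra.
apply: powR_gt0; apply: u_pos; move: cxy; rewrite in_itv /= => /andP[xc _]; lra.
Qed.


Lemma F_def x : F x = x `^ aa * (`|du x| `^ (qq - 1) * du x).
Proof. by rewrite /F /flux /aa /qq; congr (_ * (_ `^ _ * _)); ring. Qed.

Lemma F_le0 x : s0 < x -> F x <= 0.
Proof.
move=> sx; rewrite leNgt; apply/negP => Fx.
have x0 : 0 < x by move: (hs0); lra.
have xa0 : 0 < x `^ aa by exact: pgt0.
set c := F x / x `^ aa.
have c0 : 0 < c by rewrite /c divr_gt0.
set d := c `^ (qq^-1).
have d0 : 0 < d by exact: pgt0.
have q0 := qq_gt0.
have key : forall t, s0 < t -> t < x -> d < du t.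
  move=> t st tx.
  have Ft : F x < F t := F_decr st tx.
  have t0 : 0 < t by move: (hs0); lra.
  rewrite ltNge; apply/negP => dut.
  case: (leP (du t) 0) => [dneg | dpos].
    have : F t <= 0.
      rewrite F_def spow_neg // mulrN oppr_le0.
      by apply: mulr_ge0; apply: pge0.
    lra.
  have : F t <= F x.
    rewrite F_def spow_pos //; last exact: ltW.
    have -> : F x = x `^ aa * d `^ qq.
      by rewrite /d pKV ?(gt_eqF q0) ?(ltW c0) // /c mulrC divfK // gt_eqF.
    apply: ler_pM; try exact: pge0.
      apply: ple; [exact: ltW aa_gt0 | exact: ltW | exact: ltW].
    apply: ple; [exact: ltW | exact: ltW | exact: dut].
  lra.
have [t [st [tx H]]] := right_pick du_cvg d0 sx.
have := key t st tx; have := du_s0.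
move: H; rewrite ltr_norml; lra.
Qed.

Lemma F_lt0 x : s0 < x -> F x < 0.
Proof.
move=> sx; have h1 : s0 < (s0 + x) / 2 by lra.
have h2 : (s0 + x) / 2 < x by lra.
have := F_decr h1 h2; have := F_le0 h1; lra.
Qed.

Lemma du_lt0 x : s0 < x -> du x < 0.
Proof.
move=> sx; rewrite ltNge; apply/negP => d0.
have := F_lt0 sx; rewrite F_def spow_pos //; last exact: qq_gt0.
have : 0 <= x `^ aa * du x `^ qq by apply: mulr_ge0; apply: pge0.
lra.
Qed.

Lemma F_neg_eq x : du x <= 0 -> F x = - (x `^ aa * `|du x| `^ qq).
Proof. by move=> d0; rewrite F_def spow_neg ?mulrN //; exact: qq_gt0. Qed.

Lemma ndu_eq x : s0 < x -> - du x = (- F x) `^ (qq^-1) * x `^ (- (aa / qq)).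
Proof.
move=> sx; have x0 : 0 < x by move: (hs0); lra.
have q0 := qq_gt0.
rewrite F_neg_eq; last exact: ltW (du_lt0 sx).
rewrite opprK pM ?pge0 // pK ?(gt_eqF q0) ?normr_ge0 //.
rewrite -pMM mulrAC -pD // subrr pr0 mul1r.
by rewrite ltr0_norm // du_lt0.
Qed.

Lemma u_noninc x y : s0 < x -> x <= y -> u y <= u x.
Proof.
move=> sx xy; apply: (@nonincr_deriv _ u du) => //.
  by move=> z /andP[xz _]; apply: du_der; exact: lt_le_trans xz.
by move=> z /andP[xz _]; apply: ltW; apply: du_lt0; exact: lt_trans xz.
Qed.

Lemma near_val e r : 0 < e -> s0 < r -> exists t, s0 < t /\ t < r /\ `|u t - 1| < e.
Proof.
move=> e0 sr.
set M := `|du s0| + 1.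
have M0 : 0 < M by rewrite /M; have := normr_ge0 (du s0); lra.
have eM : 0 < e / M by rewrite divr_gt0.
have [hm0 [hm0p [hr0 he0]]] : exists hm0, 0 < hm0 /\ hm0 <= r - s0 /\ hm0 <= e / M.
  case: (leP (r - s0) (e / M)) => H0.
    by exists (r - s0); split; [lra | split; lra].
  by exists (e / M); split; [lra | split; lra].
have [h [h0 [hh H]]] := right_pick dq_cvg ltr01 hm0p.
exists (s0 + h); split; first lra.
have hr : h < r - s0 by lra.
have he : h < e / M by lra.
split; first lra.
rewrite u_s0 in H.
set q := h^-1 * (u (s0 + h) - 1) in H.
have E : u (s0 + h) - 1 = h * q by rewrite /q mulrA divff ?mul1r // gt_eqF.
rewrite E normrM (gtr0_norm h0).
have hq : `|q| < M.
  move: H; rewrite ltr_norml => /andP[H2 H3].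
  rewrite ltr_norml; apply/andP; split.
  - have : - du s0 <= `|du s0| by rewrite -normrN ler_norm.
    have := du_s0; rewrite /M; lra.
  - rewrite /M; have := ler_norm (du s0); lra.
have : h * `|q| < h * M by rewrite ltr_pM2l.
have : h * M < e by rewrite -ltr_pdivlMr.
lra.
Qed.

Lemma u_le1 x : s0 < x -> u x <= 1.
Proof.
move=> sx; rewrite leNgt; apply/negP => ux.
have e0 : 0 < u x - 1 by lra.
have [t [st [tx H]]] := near_val e0 sx.
have := u_noninc st (ltW tx).
move: H; rewrite ltr_norml; lra.
Qed.

Lemma Fbound t x : s0 < t -> t <= x ->
  F x <= - (lam / nb * u x `^ p * (x `^ nb - t `^ nb)).
Proof.
move=> st tx.
have nb0 := nb_gt0.
set H := fun y => F y + lam / nb * u y `^ p * (y `^ nb - t `^ nb).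
have : H x <= H t.
  apply: (@nonincr_deriv _ H
    (fun y => lam / nb * ((y `^ nb - t `^ nb) * (p * u y `^ (p - 1) * du y)))) => //.
    move=> y /andP[ty _].
    have sy : s0 < y by exact: lt_le_trans st ty.
    have y0 : 0 < y by move: (hs0); lra.
    have D := isdD (F_der sy) (isdM (isdM (isdC (lam / nb) y)
        (is_derive_powR_comp p (du_der sy) (u_pos (ltW sy))))
        (isdD (isdP nb y0) (isdC (- t `^ nb) y))).
    apply: (isd_ext D) => //=.
    rewrite /nb; field. by rewrite -/nb gt_eqF.
  move=> y /andP[ty _].
  have sy : s0 < y by exact: lt_trans st ty.
  apply: mulr_ge0_le0; first by apply: divr_ge0; [exact: ltW lam_gt0 | exact: ltW].
  apply: mulr_ge0_le0.
    rewrite subr_ge0; apply: ple; [exact: ltW | move: (hs0); lra | exact: ltW].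
  apply: mulr_ge0_le0; first by apply: mulr_ge0; [exact: ltW p_gt0 | exact: pge0].
  exact: ltW (du_lt0 sy).
rewrite /H subrr mulr0 addr0 => Hxt.
have := F_le0 st; lra.
Qed.

Lemma negF_pow y : s0 < y -> (- F y) `^ (qq^-1) = - du y * y `^ (aa / qq).
Proof.
move=> sy; have y0 : 0 < y by move: (hs0); lra.
by rewrite ndu_eq // -mulrA -pD // addNr pr0 mulr1.
Qed.

Lemma drop t r0 r1 : s0 < t -> t <= r0 -> r0 <= r1 ->
  (- F t) `^ (qq^-1) * (r0 `^ ee - r1 `^ ee) / (- ee) <= u r0 - u r1.
Proof.
move=> st tr0 r01.
have e0 := ee_lt0.
set K := (- F t) `^ (qq^-1).
set Z := fun y => u y + K / ee * y `^ ee.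
have : Z r1 <= Z r0.
  apply: (@nonincr_deriv _ Z (fun y => du y + K * y `^ (ee - 1))) => //.
    move=> y /andP[ty _].
    have sy : s0 < y by exact: lt_le_trans st (le_trans tr0 ty).
    have y0 : 0 < y by move: (hs0); lra.
    have D := isdD (du_der sy) (isdM (isdC (K / ee) y) (isdP ee y0)).
    apply: (isd_ext D) => //=.
    field; by rewrite lt_eqF.
  move=> y /andP[ty _].
  have sy : s0 < y by exact: lt_le_trans st (le_trans tr0 (ltW ty)).
  have y0 : 0 < y by move: (hs0); lra.
  have -> : ee - 1 = - (aa / qq) by rewrite /ee; lra.
  have E := ndu_eq sy.
  have : K <= (- F y) `^ (qq^-1).
    apply: ple; first by rewrite invr_ge0; exact: ltW qq_gt0.
      have := F_lt0 st; lra.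
    have := F_decr st (le_lt_trans tr0 ty); lra.
  move=> HK.
  have : K * y `^ (- (aa / qq)) <= (- F y) `^ (qq^-1) * y `^ (- (aa / qq)).
    by apply: ler_wpM2r => //; exact: pge0.
  lra.
rewrite /Z => HZ.
have -> : K * (r0 `^ ee - r1 `^ ee) / - ee = K / ee * r1 `^ ee - K / ee * r0 `^ ee.
  field; by rewrite lt_eqF.
lra.
Qed.

Lemma energy t x : s0 < t -> t <= x ->
  lam * mq * s0 `^ ka / (p + 1) * (u t `^ (p + 1) - u x `^ (p + 1)) <= (- F x) `^ mq.
Proof.
move=> st tx.
have p0 := p_gt0.
set C := lam * mq * s0 `^ ka / (p + 1).
set E := fun y => - ((- F y) `^ mq + C * u y `^ (p + 1)).
have : E x <= E t.
  apply: (@nonincr_deriv _ E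
    (fun y => - (lam * mq * u y `^ p * (- du y) * (y `^ ka - s0 `^ ka)))) => //.
    move=> y /andP[ty _].
    have sy : s0 < y by exact: lt_le_trans st ty.
    have y0 : 0 < y by move: (hs0); lra.
    have Fy : 0 < - F y by have := F_lt0 sy; lra.
    have D := isdN (isdD (is_derive_powR_comp mq (isdN (F_der sy)) Fy)
      (isdM (isdC C y) (is_derive_powR_comp (p + 1) (du_der sy) (u_pos (ltW sy))))).
    apply: (isd_ext D) => //=.
    have hp1 : p + 1 - 1 = p by ring.
    have Eka : y `^ ka = y `^ (aa / qq) * y `^ (nb - 1) by rewrite /ka pD.
    rewrite hp1 mq1 negF_pow // /C Eka.
    field; by rewrite gt_eqF //; lra.
  move=> y /andP[ty _].
  have sy : s0 < y by exact: lt_trans st ty.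
  rewrite oppr_le0; apply: mulr_ge0.
    apply: mulr_ge0; last by have := du_lt0 sy; lra.
    apply: mulr_ge0; last exact: pge0.
    apply: mulr_ge0; [exact: ltW lam_gt0 | exact: ltW mq_gt0].
  rewrite subr_ge0; apply: ple; [exact: ltW ka_gt0 | exact: hs0 | ].
  by move: (hs0) => _; apply: ltW; exact: lt_trans st ty.
rewrite /E => HE.
have := pge0 (- F t) mq.
lra.
Qed.

Lemma negdu_lb r y : s0 < r -> 4 * s0 < r -> r / 2 <= y ->
  c3 `^ (qq^-1) * u y `^ (p / qq) * y `^ gg <= - du y.
Proof.
move=> sr s4r ry.
have r0 : 0 < r by move: (hs0); lra.
have st : s0 < r / 4 by lra.
have ty : r / 4 <= y by lra.
have sy : s0 < y by lra.
have y0 : 0 < y by lra.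
have nb0 := nb_gt0; have q0 := qq_gt0.
have HF : c3 * u y `^ p * y `^ nb <= - F y.
  have := Fbound st ty.
  have : (r / 4) `^ nb <= y `^ nb * 2 `^ (- nb).
    rewrite -half_pow; last lra.
    apply: ple; lra.
  move=> H1 H2.
  have H3 : 0 <= lam / nb * u y `^ p.
    by apply: mulr_ge0; [apply: divr_ge0; [exact: ltW lam_gt0 | lra] | exact: pge0].
  have : lam / nb * u y `^ p * (y `^ nb * (1 - 2 `^ (- nb))) <=
         lam / nb * u y `^ p * (y `^ nb - (r / 4) `^ nb).
    by apply: ler_wpM2l => //; lra.
  rewrite /c3.
  have -> : lam / nb * (1 - 2 `^ (- nb)) * u y `^ p * y `^ nb =
            lam / nb * u y `^ p * (y `^ nb * (1 - 2 `^ (- nb))) by ring.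
  lra.
rewrite ndu_eq //.
have : (c3 * u y `^ p * y `^ nb) `^ (qq^-1) <= (- F y) `^ (qq^-1).
  apply: ple => //; first by rewrite invr_ge0 ltW.
  by apply: mulr_ge0; [apply: mulr_ge0; [exact: ltW c3_gt0 | exact: pge0] | exact: pge0].
have c30 := c3_gt0.
have E1 : (c3 * u y `^ p * y `^ nb) `^ (qq^-1) =
          c3 `^ (qq^-1) * u y `^ (p / qq) * y `^ (nb * qq^-1).
  rewrite (@pM _ (c3 * u y `^ p) (y `^ nb)); last exact: pge0.
    rewrite (@pM _ c3 (u y `^ p)); [| exact: ltW | exact: pge0].
    by rewrite -!pMM.
  by apply: mulr_ge0; [exact: ltW | exact: pge0].
rewrite E1 => H.
have -> : y `^ gg = y `^ (nb * qq^-1) * y `^ (- (aa / qq)).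
  by rewrite -pD // /gg; congr (_ `^ _); field; exact: lt0r_neq0.
rewrite mulrA.
apply: ler_wpM2r; first exact: pge0.
exact: H.
Qed.

Lemma decay r : s0 < r -> 4 * s0 < r -> r `^ th * u r <= c4 `^ (- kk^-1).
Proof.
move=> sr s4r.
have r0 : 0 < r by move: (hs0); lra.
have k0 := kk_gt0; have g0 := gg_gt0; have q0 := qq_gt0.
set c5 := kk * c3 `^ (qq^-1) / (gg + 1).
have c50 : 0 < c5.
  rewrite /c5; apply: divr_gt0; last lra.
  by apply: mulr_gt0 => //; apply: pgt0; exact: c3_gt0.
set W := fun y => - (u y `^ (- kk) - c5 * y `^ (gg + 1)).
have sr2 : s0 < r / 2 by lra.
have : W r <= W (r / 2).
  apply: (@nonincr_deriv _ W
    (fun y => - kk * (u y `^ (- kk - 1) * (- du y) - c3 `^ (qq^-1) * y `^ gg))).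
  - lra.
  - move=> y /andP[ty _].
    have sy : s0 < y by lra.
    have y0 : 0 < y by lra.
    have D := isdN (isdD (is_derive_powR_comp (- kk) (du_der sy) (u_pos (ltW sy)))
      (isdN (isdM (isdC c5 y) (isdP (gg + 1) y0)))).
    apply: (isd_ext D) => //=.
    have hg : gg + 1 - 1 = gg by ring.
    rewrite hg /c5; field; apply: lt0r_neq0; lra.
  - move=> y /andP[ty _].
    have sy : s0 < y by lra.
    have uy := u_pos (ltW sy).
    rewrite mulNr oppr_le0; apply: mulr_ge0; first lra.
    rewrite subr_ge0.
    have := negdu_lb sr s4r (ltW ty) => H.
    have E : u y `^ (- kk - 1) * u y `^ (p / qq) = 1.
      rewrite -pD //; have -> : - kk - 1 + p / qq = 0.
        by rewrite /kk; field; exact: lt0r_neq0.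
      exact: pr0.
    have : u y `^ (- kk - 1) * (c3 `^ (qq^-1) * u y `^ (p / qq) * y `^ gg) <=
           u y `^ (- kk - 1) * - du y by apply: ler_wpM2l => //; exact: pge0.
    have -> : u y `^ (- kk - 1) * (c3 `^ (qq^-1) * u y `^ (p / qq) * y `^ gg) =
              (u y `^ (- kk - 1) * u y `^ (p / qq)) * (c3 `^ (qq^-1) * y `^ gg) by ring.
    by rewrite E mul1r.
rewrite /W => HW.
have ur := u_pos (ltW sr).
have H1 : c4 * r `^ (gg + 1) <= u r `^ (- kk).
  have := pge0 (u (r / 2)) (- kk).
  have := half_pow (gg + 1) (ltW r0).
  move=> Eh H0.
  have -> : c4 * r `^ (gg + 1) = c5 * (r `^ (gg + 1) - (r / 2) `^ (gg + 1)).
    by rewrite Eh /c4 /c5; ring.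
  lra.
have c4r : 0 < c4 * r `^ (gg + 1) by rewrite mulr_gt0 ?c4_gt0 ?pgt0.
have H2 : (u r `^ (- kk)) `^ (- kk^-1) <= (c4 * r `^ (gg + 1)) `^ (- kk^-1).
  apply: plen => //; rewrite oppr_le0 invr_ge0; lra.
move: H2; rewrite -pMM mulrNN mulfV ?p1 ?(ltW ur); last exact: lt0r_neq0.
rewrite pM ?pge0 ?(ltW c4_gt0) // -pMM => H2.
have -> : c4 `^ (- kk^-1) = r `^ th * (c4 `^ (- kk^-1) * r `^ ((gg + 1) * - kk^-1)).
  rewrite mulrCA -pD //.
  have -> : th + (gg + 1) * - kk^-1 = 0 by rewrite /th; field; exact: lt0r_neq0.
  by rewrite pr0 mulr1.
by apply: ler_wpM2l => //; exact: pge0.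
by [].
Qed.

Lemma KF_ub : 0 < s0 -> (- F (2 * s0)) `^ (qq^-1) * s0 `^ ee * cE <= 1.
Proof.
move=> s00.
have e0 := ee_lt0.
have h := @drop (2 * s0) (2 * s0) (4 * s0).
have := h ltac:(lra) (lexx _) ltac:(lra).
have -> : (2 * s0) `^ ee - (4 * s0) `^ ee = s0 `^ ee * (2 `^ ee - 4 `^ ee).
  have E2 : (2 * s0) `^ ee = 2 `^ ee * s0 `^ ee by rewrite pM //; lra.
  have E3 : (4 * s0) `^ ee = 4 `^ ee * s0 `^ ee by rewrite pM //; lra.
  by rewrite E2 E3; ring.
have := u_le1 (ltac:(lra) : s0 < 2 * s0).
have := u_pos (ltac:(lra) : s0 <= 4 * s0).
rewrite /cE.
have -> : (- F (2 * s0)) `^ qq^-1 * (s0 `^ ee * (2 `^ ee - 4 `^ ee)) / - ee =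
  (- F (2 * s0)) `^ qq^-1 * s0 `^ ee * ((2 `^ ee - 4 `^ ee) / - ee) by ring.
lra.
Qed.

Lemma FA : 0 < s0 -> 2^-1 <= u (2 * s0) -> cA * s0 `^ nb <= - F (2 * s0).
Proof.
move=> s00 v2.
have nb0 := nb_gt0.
have := @Fbound (3 / 2 * s0) (2 * s0) ltac:(lra) ltac:(lra).
have hv : (2^-1) `^ p <= u (2 * s0) `^ p.
  apply: ple; [exact: ltW p_gt0 | lra | lra].
have hd : 0 <= (2 * s0) `^ nb - (3 / 2 * s0) `^ nb.
  rewrite subr_ge0; apply: ple; lra.
have hl : 0 <= lam / nb by apply: divr_ge0; [exact: ltW lam_gt0 | lra].
have : lam / nb * (2^-1) `^ p * ((2 * s0) `^ nb - (3 / 2 * s0) `^ nb) <=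
       lam / nb * u (2 * s0) `^ p * ((2 * s0) `^ nb - (3 / 2 * s0) `^ nb).
  apply: ler_wpM2r => //; apply: ler_wpM2l => //.
have -> : cA * s0 `^ nb =
   lam / nb * (2^-1) `^ p * ((2 * s0) `^ nb - (3 / 2 * s0) `^ nb).
  have E2 : (2 * s0) `^ nb = 2 `^ nb * s0 `^ nb by rewrite pM //; lra.
  have E3 : (3 / 2 * s0) `^ nb = (3 / 2) `^ nb * s0 `^ nb by rewrite pM //; lra.
  by rewrite E2 E3 /cA; ring.
lra.
Qed.

Lemma FB : 0 < s0 -> u (2 * s0) < 2^-1 -> cB * s0 `^ ka <= (- F (2 * s0)) `^ mq.
Proof.
move=> s00 v2.
have p0 := p_gt0.
have [t [st [tx H]]] := @near_val (4^-1) (3 / 2 * s0) ltac:(lra) ltac:(lra).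
have ut : 3 / 4 < u t by move: H; rewrite ltr_norml; lra.
have := @energy t (2 * s0) st ltac:(lra).
have h1 : (3 / 4) `^ (p + 1) <= u t `^ (p + 1) by apply: ple; lra.
have h2 : u (2 * s0) `^ (p + 1) <= (2^-1) `^ (p + 1).
  apply: ple; try lra; apply: ltW; apply: u_pos; lra.
have hc : 0 <= lam * mq * s0 `^ ka / (p + 1).
  apply: divr_ge0; last lra.
  apply: mulr_ge0; last exact: pge0.
  by apply: mulr_ge0; [exact: ltW lam_gt0 | exact: ltW mq_gt0].
have : lam * mq * s0 `^ ka / (p + 1) * ((3 / 4) `^ (p + 1) - (2^-1) `^ (p + 1)) <=
       lam * mq * s0 `^ ka / (p + 1) * (u t `^ (p + 1) - u (2 * s0) `^ (p + 1)).
  by apply: ler_wpM2l => //; lra.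
have -> : cB * s0 `^ ka =
  lam * mq * s0 `^ ka / (p + 1) * ((3 / 4) `^ (p + 1) - (2^-1) `^ (p + 1)).
  by rewrite /cB; field; apply: lt0r_neq0; lra.
lra.
Qed.

Definition Uf y := y * du y + rhoD * u y.
Definition Phi y := - ((m - 1) / m) * y `^ (N%:R + al - 1) * `|du y| `^ (m - 1) * Uf y
  + lam / (p + 1) * (y `^ (N%:R + be) * u y `^ (p + 1)).
Definition Psi y := qq / m * ((- F y) `^ mq * y `^ ee + rhoD * u y * F y)
  + lam / (p + 1) * (y `^ nb * u y `^ (p + 1)).
Definition fI y := y `^ (nb - 1) * u y `^ (p + 1).

Lemma negF_mq y : s0 < y -> (- F y) `^ mq = - F y * (- du y * y `^ (aa / qq)).
Proof.
move=> sy; have Fy : 0 < - F y by have := F_lt0 sy; lra.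
have -> : mq = 1 + qq^-1 by rewrite -mq1; ring.
by rewrite pD // p1 ?negF_pow //; lra.
Qed.

Lemma y_ee y : 0 < y -> y `^ ee = y / y `^ (aa / qq).
Proof. by move=> y0; rewrite /ee pB // p1 //; exact: ltW. Qed.

Lemma Phi_Psi y : s0 < y -> Phi y = Psi y.
Proof.
move=> sy; have y0 : 0 < y by move: (hs0); lra.
have Fn := F_neg_eq (ltW (du_lt0 sy)).
have m0 : 0 < m by move: hm; lra.
have P0 : 0 < y `^ (aa / qq) by exact: pgt0.
rewrite /Phi /Psi -/aa -/qq -/nb negF_mq // y_ee // /Uf.
have p0 := p_gt0.
rewrite Fn; field; nz.
Qed.

Lemma Psi_der y : s0 < y -> is_derive y 1 Psi (cc * fI y).
Proof.
move=> sy; have y0 : 0 < y by move: (hs0); lra.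
have m0 : 0 < m by move: hm; lra.
have P0 : 0 < y `^ (aa / qq) by exact: pgt0.
have q0 := qq_gt0; have p0 := p_gt0.
have Fy : 0 < - F y by have := F_lt0 sy; lra.
have uy := u_pos (ltW sy).
have D := isdD (isdM (isdC (qq / m) y)
   (isdD (isdM (is_derive_powR_comp mq (isdN (F_der sy)) Fy) (isdP ee y0))
         (isdM (isdM (isdC rhoD y) (du_der sy)) (F_der sy))))
   (isdM (isdC (lam / (p + 1)) y)
         (isdM (isdP nb y0) (is_derive_powR_comp (p + 1) (du_der sy) uy))).
apply: (isd_ext D) => //=.
have E1 : y `^ (ee - 1) = (y `^ (aa / qq))^-1.
  by rewrite -pN; congr (_ `^ _); rewrite /ee; ring.
have E2 : y `^ nb = y * y `^ (nb - 1).
  by rewrite -{2}(p1 (ltW y0)) -pD //; congr (_ `^ _); ring.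
have E3 : u y `^ (p + 1 - 1) = u y `^ p by congr (_ `^ _); ring.
have E4 : u y `^ (p + 1) = u y `^ p * u y by rewrite pD // p1 //; exact: ltW.
rewrite mq1 negF_pow // negF_mq // y_ee // E1 E2 E3 /fI E4 rho_eq /cc /mq /ee.
field; nz.
Qed.

Lemma u_rcont : u y @[y --> s0^'+] --> u s0.
Proof.
apply/at_right_epsP => e e0.
have [d1 d10 Hd1] := (at_right_epsP _ _ _).1 dq_cvg 1 ltr01.
set M := `|du s0| + 1.
have M0 : 0 < M by rewrite /M; have := normr_ge0 (du s0); lra.
have eM : 0 < e / M by rewrite divr_gt0.
have [d [d0 [dd1 de]]] : exists d, 0 < d /\ d <= d1 /\ d <= e / M.
  case: (leP d1 (e / M)) => H0.
    by exists d1; split; [lra | split; lra].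
  by exists (e / M); split; [lra | split; lra].
exists d => // y sy yd.
set h := y - s0.
have h0 : 0 < h by rewrite /h; lra.
have := Hd1 h h0 ltac:(rewrite /h; lra).
have -> : s0 + h = y by rewrite /h; ring.
set q := h^-1 * (u y - u s0) => H.
have E : u s0 - u y = - (h * q) by rewrite /q mulrA divff ?mul1r; [ring | exact: lt0r_neq0].
rewrite E normrN normrM (gtr0_norm h0).
have hq : `|q| < M.
  move: H; rewrite ltr_norml => /andP[H2 H3].
  rewrite ltr_norml; apply/andP; split.
  - have : - du s0 <= `|du s0| by rewrite -normrN ler_norm.
    rewrite /M; lra.
  - rewrite /M; have := ler_norm (du s0); lra.
have : h * `|q| < h * M by rewrite ltr_pM2l.
have : h * M <= e.
  have : h * M < d * M by rewrite ltr_pM2r //; rewrite /h; lra.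
  have : d * M <= e by rewrite -ler_pdivlMr.
  lra.
lra.
Qed.

Lemma Phi_rcont : Phi y @[y --> s0^'+] --> Phi s0.
Proof.
have m1 : 0 < m - 1 by move: hm; lra.
have p0 := p_gt0.
have idpos : forall y, s0 < y -> 0 <= y by move=> y sy; move: (hs0); lra.
rewrite /Phi /Uf.
have hu : forall y, s0 < y -> 0 <= u y by move=> y sy; apply: ltW; apply: u_pos; exact: ltW.
have us0 : 0 <= u s0 by apply: ltW; apply: u_pos.
have a0 := aa_gt0; have nb0 := nb_gt0; have p10 : 0 < p + 1 by lra.
apply: rcD.
  apply: rcM; last first.
    by apply: rcD; apply: rcM; [exact: rcId | exact: du_cvg | exact: rcC | exact: u_rcont].
  apply: rcM; last first.
    apply: powR_rcont; solve [ assumption | exact: normr_ge0 | exact: (rcNorm du_cvg)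
      | (move=> y _; exact: normr_ge0) ].
  apply: rcM; first exact: rcC.
  apply: powR_rcont; solve [assumption | exact: rcId].
apply: rcM; first exact: rcC.
apply: rcM.
  apply: powR_rcont; solve [assumption | exact: rcId].
apply: powR_rcont; solve [assumption | exact: u_rcont].
Qed.

Lemma Phi_const_cc0 r : s0 < r -> cc = 0 -> Phi r = Phi s0.
Proof.
move=> sr c0.
have keq : forall t, s0 < t -> t <= r -> Phi r = Phi t.
  move=> t st tr.
  have hd : forall x, t <= x <= r -> is_derive x 1 Psi (cc * fI x).
    by move=> x /andP[tx _]; apply: Psi_der; exact: lt_le_trans tx.
  have h1 : Psi r <= Psi t.
    by apply: (nonincr_deriv tr hd) => x _; rewrite c0 mul0r.
  have hd' : forall x, t <= x <= r -> is_derive x 1 (fun y => - Psi y) (- (cc * fI x)).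
    by move=> x hx; exact: isdN (hd x hx).
  have h2 : - Psi r <= - Psi t.
    by apply: (nonincr_deriv tr hd') => x _; rewrite c0 mul0r oppr0.
  rewrite (Phi_Psi sr) (Phi_Psi st); lra.
apply: eq_of_eps => e e0.
have [t [st [tr H]]] := right_pick Phi_rcont e0 sr.
rewrite (keq t st (ltW tr)) distrC //.
Qed.

Lemma fI_der y : s0 < y -> derivable fI y 1.
Proof.
move=> sy; have y0 : 0 < y by move: (hs0); lra.
have D := isdM (isdP (nb - 1) y0) (is_derive_powR_comp (p + 1) (du_der sy) (u_pos (ltW sy))).
by case: D.
Qed.

Lemma fI_cont y : s0 < y -> {for y, continuous fI}.
Proof. by move=> sy; apply: differentiable_continuous; apply/derivable1_diffP; exact: fI_der. Qed.

Lemma fI_ge0 y : 0 <= fI y.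
Proof. by apply: mulr_ge0; exact: pge0. Qed.

Lemma fI_meas : measurable_fun `]s0, +oo[ fI.
Proof.
apply: measurable_realfun.open_continuous_measurable_fun; first exact: interval_open.
by move=> y; rewrite inE /= in_itv /= andbT => sy; exact: fI_cont.
Qed.

Lemma FTC_piece t r : s0 < t -> t < r -> cc != 0 ->
  (\int[lebesgue_measure]_(x in `[t, r]) (fI x)%:E = ((Psi r - Psi t) / cc)%:E)%E.
Proof.
move=> st tr c0.
have hPd : forall x, s0 < x -> is_derive x 1 (fun y => Psi y * cc^-1) (cc^-1 * (cc * fI x)).
  move=> x sx; have := isdM (Psi_der sx) (isdC cc^-1 x).
  by move=> D; apply: (isd_ext D) => //=; ring.
have cf : {within `[t, r], continuous fI}.
  apply: derivable_within_continuous => x; rewrite in_itv /= => /andP[tx _].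
  apply: fI_der; exact: lt_le_trans tx.
have cP : {within `[t, r], continuous (fun y => Psi y * cc^-1)}.
  apply: derivable_within_continuous => x; rewrite in_itv /= => /andP[tx _].
  by case: (hPd x (lt_le_trans st tx)).
have [_ cl cr] := (continuous_within_itvP _ tr).1 cP.
rewrite (@continuous_FTC2 _ fI (fun y => Psi y * cc^-1) t r tr cf).
- by rewrite -EFinB; congr EFin; ring.
- split => //.
  move=> x; rewrite in_itv /= => /andP[tx _].
  by case: (hPd x (lt_trans st tx)).
- move=> x; rewrite in_itv /= => /andP[tx _].
  have := hPd x (lt_trans st tx); case => _ hv.
  by rewrite derive1E hv mulrA mulVf // mul1r.
Qed.

Lemma int_eq r : s0 < r -> cc != 0 ->
  (\int[lebesgue_measure]_(x in `[s0, r]) (fI x)%:E = ((Psi r - Phi s0) / cc)%:E)%E.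
Proof.
move=> sr c0.
set T := fun n : nat => s0 + (r - s0) / (n.+2)%:R.
have n2 : forall n : nat, 0 < (n.+2)%:R :> R by move=> n; rewrite ltr0n.
have Tgt : forall n, s0 < T n.
  move=> n; rewrite /T; have : 0 < (r - s0) / (n.+2)%:R by rewrite divr_gt0 // subr_gt0.
  generalize ((r - s0) / (n.+2)%:R) => z; lra.
have Tlt : forall n, T n < r.
  move=> n; rewrite /T.
  have : (r - s0) / (n.+2)%:R < r - s0.
    rewrite ltr_pdivrMr //.
    have : (2 : R) <= (n.+2)%:R by rewrite ler_nat.
    generalize ((n.+2)%:R : R) => k; nra.
  generalize ((r - s0) / (n.+2)%:R) => z; lra.
pose Fs : nat -> set R := fun n => [set` `[T n, r]].
have nd : nondecreasing_seq Fs.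
  move=> n k nk.
  rewrite subsetEset => x; rewrite /Fs /= !in_itv /= => /andP[h1 h2].
  rewrite h2 andbT; apply: le_trans h1.
  rewrite /T lerD2l; apply: ler_wpM2l; first by have := sr; lra.
  by rewrite lef_pV2 ?posrE ?ler_nat.
have mF : forall i, measurable (Fs i) by move=> i; exact: measurable_itv.
have mf : forall i, measurable_fun (Fs i) (fun x => (fI x)%:E).
  move=> i; apply/measurable_EFinP.
  apply: (measurable_funS _ _ fI_meas); first exact: measurable_itv.
  move=> x; rewrite /Fs /= !in_itv /= andbT => /andP[h1 _].
  exact: lt_le_trans (Tgt i) h1.
have f0 : forall i x, Fs i x -> (0 <= (fI x)%:E)%E.
  by move=> i x _; rewrite /= lee_fin; exact: fI_ge0.
have h1 := ge0_nondecreasing_set_cvg_integral (mu := @lebesgue_measure R) nd mF mf f0.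
have U : \bigcup_i Fs i = `]s0, r]%classic.
  apply/seteqP; split => x.
    case=> n _; rewrite /Fs /= !in_itv /= => /andP[h3 h4]; rewrite h4 andbT.
    exact: lt_le_trans (Tgt n) h3.
  rewrite /= in_itv /= => /andP[sx xr].
  exists (Num.truncn ((r - s0) / (x - s0))) => //.
  rewrite /Fs /= in_itv /= xr andbT /T.
  have xs : 0 < x - s0 by lra.
  have h3 := truncnS_gt ((r - s0) / (x - s0)).
  set k := Num.truncn _ in h3 *.
  have h4 : (k.+1)%:R <= (k.+2)%:R :> R by rewrite ler_nat.
  have h5 : (r - s0) / (x - s0) < (k.+2)%:R.
    by move: h3 h4; generalize ((k.+2)%:R : R) ((k.+1)%:R : R) => z w; lra.
  rewrite ltr_pdivrMr // in h5.
  have : (r - s0) / (k.+2)%:R <= x - s0.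
    by rewrite ler_pdivrMr //; rewrite mulrC; exact: ltW.
  generalize ((r - s0) / (k.+2)%:R) => z; lra.
rewrite U in h1.
have hT : T n @[n --> \oo] --> s0.
  apply/cvgrPdist_lt => e e0; near=> n.
  rewrite /T opprD addrA subrr sub0r normrN ger0_norm; last first.
    by apply: divr_ge0; [lra | exact: ltW].
  rewrite ltr_pdivrMr //.
  have hn : (r - s0) / e < n%:R by near: n; exact: nbhs_infty_gtr.
  rewrite ltr_pdivrMr // in hn.
  have hk : e * n%:R <= e * (n.+2)%:R.
    by rewrite ler_pM2l // ler_nat; exact: leqW (leqnSn n).
  rewrite mulrC in hn.
  move: hn hk; generalize (e * (n.+2)%:R) (e * n%:R) => k j; lra.
have hPhi := (cvg_at_rightP Phi s0 (Phi s0)).1 Phi_rcont T (conj Tgt hT).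
have h4 : ((Psi r - Phi (T n)) / cc) @[n --> \oo] --> (Psi r - Phi s0) / cc.
  apply: cvgM; last exact: cvg_cst.
  by apply: cvgB; [exact: cvg_cst | exact: hPhi].
have h5 : (fun n => \int[lebesgue_measure]_(x in Fs n) (fI x)%:E)%E =
          (fun n => ((Psi r - Phi (T n)) / cc)%:E).
  apply/funext => n; rewrite (Phi_Psi (Tgt n)).
  exact: FTC_piece (Tgt n) (Tlt n) c0.
rewrite h5 in h1.
have h6 : (fun n => ((Psi r - Phi (T n)) / cc)%:E) @ \oo --> ((Psi r - Phi s0) / cc)%:E.
  by apply: cvg_EFin; [near=> n; by [] | exact: h4].
have := cvg_unique _ h1 h6 => <-.
rewrite -integral_itv_obnd_cbnd //.
apply/measurable_EFinP.
apply: (measurable_funS _ _ fI_meas); first exact: measurable_itv.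
by move=> x /=; rewrite !in_itv /= andbT => /andP[h7 _].
Unshelve. all: by end_near.
Qed.
End Sol.

Lemma pow_solve (c e x : R) : 0 < c -> 0 < e -> 0 < x -> c * x `^ e <= 1 -> x <= c `^ (- e^-1).
Proof.
move=> c0 e0 x0 h.
have h1 : x `^ e <= c^-1.
  by rewrite -(ler_pM2l c0) mulfV //; exact: lt0r_neq0.
have -> : x = (x `^ e) `^ (e^-1) by rewrite pK //; [exact: ltW | exact: lt0r_neq0].
have -> : c `^ (- e^-1) = (c^-1) `^ (e^-1) by rewrite -[c^-1](powR_inv1 (ltW c0)) -pMM mulN1r.
apply: ple => //; [by rewrite invr_ge0 ltW | exact: pge0].
Qed.

Definition SA := (cA `^ (qq^-1) * cE) `^ (- (gg + 1)^-1).
Definition SB := (cB `^ (m^-1) * cE) `^ (- ((nb + qq - aa) / m)^-1).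

Lemma s0_le s0 u du : 0 <= s0 -> positive_solution N al be m lam p s0 u du -> s0 <= SA + SB.
Proof.
move=> hs0 sol.
have SA0 : 0 <= SA by exact: pge0.
have SB0 : 0 <= SB by exact: pge0.
have [s00|] := ltP 0 s0; last by move=> ?; lra.
have q0 := qq_gt0; have m0 : 0 < m by move: hm; lra.
have hK := KF_ub hs0 sol s00.
have e0 := cE_gt0.
set FF := - flux N al m du (2 * s0).
have FF0 : 0 < FF.
  by rewrite /FF; have := F_lt0 hs0 sol (ltac:(lra) : s0 < 2 * s0); lra.
have [v2|v2] := leP (2^-1) (u (2 * s0)).
- have hA' := FA hs0 sol s00 v2.
  have h1 : (cA * s0 `^ nb) `^ (qq^-1) <= FF `^ (qq^-1).
    apply: ple => //; first by rewrite invr_ge0 ltW.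
    by apply: mulr_ge0; [exact: ltW cA_gt0 | exact: pge0].
  rewrite pM ?pge0 ?(ltW cA_gt0) // -pMM in h1.
  have h2 : cA `^ (qq^-1) * cE * s0 `^ (gg + 1) <= 1.
    have -> : s0 `^ (gg + 1) = s0 `^ (nb * qq^-1) * s0 `^ ee.
      by rewrite -pD // /gg /ee; congr (_ `^ _); field; exact: lt0r_neq0.
    have : cA `^ qq^-1 * s0 `^ (nb * qq^-1) * (s0 `^ ee * cE) <=
           FF `^ qq^-1 * (s0 `^ ee * cE).
      by apply: ler_wpM2r => //; apply: mulr_ge0; [exact: pge0 | exact: ltW].
    move: hK; rewrite -/FF => hK.
    have -> : cA `^ qq^-1 * cE * (s0 `^ (nb * qq^-1) * s0 `^ ee) =
              cA `^ qq^-1 * s0 `^ (nb * qq^-1) * (s0 `^ ee * cE) by ring.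
    lra.
  have : s0 <= SA.
    apply: pow_solve => //; last by have := gg_gt0; lra.
    by apply: mulr_gt0 => //; apply: pgt0; exact: cA_gt0.
  lra.
- have hB' := FB hs0 sol s00 v2.
  have h1 : (cB * s0 `^ ka) `^ (m^-1) <= (FF `^ mq) `^ (m^-1).
    apply: ple => //; first by rewrite invr_ge0 ltW.
    by apply: mulr_ge0; [exact: ltW cB_gt0 | exact: pge0].
  rewrite pM ?pge0 ?(ltW cB_gt0) // -!pMM in h1.
  have hmq : mq * m^-1 = qq^-1.
    by rewrite /mq; field; apply/andP; split; exact: lt0r_neq0.
  rewrite hmq in h1.
  have h2 : cB `^ (m^-1) * cE * s0 `^ ((nb + qq - aa) / m) <= 1.
    have -> : s0 `^ ((nb + qq - aa) / m) = s0 `^ (ka * m^-1) * s0 `^ ee.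
      rewrite -pD // /ka /ee; congr (_ `^ _).
      rewrite m_eq; field; apply/andP; split; [exact: lt0r_neq0 | apply: lt0r_neq0; lra].
    have : cB `^ m^-1 * s0 `^ (ka * m^-1) * (s0 `^ ee * cE) <=
           FF `^ qq^-1 * (s0 `^ ee * cE).
      by apply: ler_wpM2r => //; apply: mulr_ge0; [exact: pge0 | exact: ltW].
    move: hK; rewrite -/FF => hK.
    have -> : cB `^ m^-1 * cE * (s0 `^ (ka * m^-1) * s0 `^ ee) =
              cB `^ m^-1 * s0 `^ (ka * m^-1) * (s0 `^ ee * cE) by ring.
    lra.
  have : s0 <= SB.
    apply: pow_solve => //.
      by apply: mulr_gt0 => //; apply: pgt0; exact: cB_gt0.
    by apply: divr_gt0 => //; have := nb_gta; lra.
  lra.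
Qed.

Definition KK := (4 * (SA + SB)) `^ th + c4 `^ (- kk^-1).

Lemma main_bound s0 u du r : 0 <= s0 -> positive_solution N al be m lam p s0 u du ->
  s0 < r -> r `^ th * u r <= KK.
Proof.
move=> hs0 sol sr.
have h1 := pge0 (4 * (SA + SB)) th.
have h2 := pge0 c4 (- kk^-1).
have th0 : 0 <= th by apply: ltW; rewrite /th divr_gt0 ?kk_gt0 //; have := gg_gt0; lra.
have [s4r|] := ltP (4 * s0) r.
  have := decay hs0 sol sr s4r; rewrite /KK; lra.
move=> rs.
have S := s0_le hs0 sol.
have ur := u_le1 hs0 sol sr.
have up := u_pos hs0 sol (ltW sr).
have : r `^ th * u r <= r `^ th by rewrite ler_piMr ?pge0 //; exact: ltW.
have : r `^ th <= (4 * (SA + SB)) `^ th by apply: ple => //; lra.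
rewrite /KK; lra.
Qed.

End Params.

Unset Implicit Arguments.

Theorem lemma3p2 (R : realType) (N : nat) (al be m lam p : R) :
  (1 <= N)%N -> 1 < m -> 0 < N%:R + al - m -> 0 < be - al + 1 ->
  0 < lam -> m - 1 < p ->
  let rho := (N%:R + al - m) / (m - 1) in
  exists C1 C2 : R, 0 < C1 /\ 0 < C2 /\
  forall (s0 : R) (u du : R -> R), 0 <= s0 ->
    positive_solution N al be m lam p s0 u du ->
    let U := fun r => r * du r + rho * u r in
    (forall r, s0 < r ->
       (N%:R + be != rho * p ->
         r `^ (N%:R + be) * u r `^ (p + 1) <=
         C1 * r `^ (- ((m * (N%:R + be) - (N%:R + al - m) * (p + 1)) / (p - m + 1))))
       /\
       (N%:R + be = rho * p ->
         r `^ (N%:R + be) * u r `^ (p + 1) <=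
         C2 * r `^ (- (((N%:R + al - m) * (p + 1) - (m - 1) * (N%:R + be)) / (m - 1)))))
    /\
    (forall r, s0 < r ->
       ((lam * ((N%:R + be) / (p + 1) - (N%:R + al - m) / m))%:E *
         (\int[lebesgue_measure]_(s in `[s0, r]) (s `^ (N%:R + be - 1) * u s `^ (p + 1))%:E))%E
       = (- ((m - 1) / m) * r `^ (N%:R + al - 1) * `|du r| `^ (m - 1) * U r
          + (m - 1) / m * s0 `^ (N%:R + al - 1) * `|du s0| `^ (m - 1) * U s0
          + lam / (p + 1) * (r `^ (N%:R + be) * u r `^ (p + 1) - s0 `^ (N%:R + be)))%:E).
Proof.
move=> hN hm hA hB hlam hp; cbv zeta.
pose K := KK N al be m lam p.
have K0 : 0 < K.
  rewrite /K /KK; have := pge0 (4 * (SA N al be m lam p + SB N al be m lam p))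
     (th N al be m p).
  have := pgt0 (- (kk m p)^-1) (c4_gt0 hN hm hA hB hlam hp).
  lra.
have q0 := qq_gt0 hN hm hA hB hlam hp.
have k0 := kk_gt0 hN hm hA hB hlam hp.
have pq := p_gtq hN hm hA hB hlam hp.
have p0 := p_gt0 hN hm hA hB hlam hp.
have m0 : 0 < m by lra.
exists (K `^ (p + 1)), (K `^ (p + 1)).
split; first exact: pgt0.
split; first exact: pgt0.
move=> s0 u du hs0 sol; cbv zeta.
split.
  move=> r sr.
  have r0 : 0 < r by lra.
  have ur := u_pos hN hm hA hB hlam hp hs0 sol (ltW sr).
  have hb := main_bound hN hm hA hB hlam hp hs0 sol sr.
  have key : r `^ (N%:R + be) * u r `^ (p + 1) <=
             K `^ (p + 1) * r `^ (nb N be - th N al be m p * (p + 1)).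
    have h1 : (r `^ th N al be m p * u r) `^ (p + 1) <= K `^ (p + 1).
      apply: ple => //; [lra | apply: mulr_ge0; [exact: pge0 | exact: ltW]].
    rewrite pM ?pge0 ?(ltW ur) // -pMM in h1.
    have -> : r `^ (N%:R + be) * u r `^ (p + 1) =
      (r `^ (th N al be m p * (p + 1)) * u r `^ (p + 1)) *
        r `^ (nb N be - th N al be m p * (p + 1)).
      rewrite mulrAC -pD //; congr (_ * _); congr (_ `^ _); rewrite /nb; ring.
    apply: ler_wpM2r => //; exact: pge0.
  split => [_|hc].
    have -> : - ((m * (N%:R + be) - (N%:R + al - m) * (p + 1)) / (p - m + 1)) =
              nb N be - th N al be m p * (p + 1).
      rewrite /th /kk /gg /nb /aa /qq; field.
      apply/andP; split; apply: lt0r_neq0; rewrite /qq in q0 pq; lra.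
    exact: key.
  have -> : - (((N%:R + al - m) * (p + 1) - (m - 1) * (N%:R + be)) / (m - 1)) =
            nb N be - th N al be m p * (p + 1).
    rewrite /th /kk /gg /nb /aa /qq hc; field.
    rewrite /qq in q0 pq.
    repeat (apply/andP; split); apply: lt0r_neq0; lra.
  exact: key.
move=> r sr.
have ccE : lam * ((N%:R + be) / (p + 1) - (N%:R + al - m) / m) = cc N al be m lam p.
  by rewrite /cc /nb /aa /qq; congr (_ * (_ - _ / _)); ring.
have us0 := u_s0 hN hm hA hB hlam hp hs0 sol.
have RHS : - ((m - 1) / m) * r `^ (N%:R + al - 1) * `|du r| `^ (m - 1) * (r * du r + (N%:R + al - m) / (m - 1) * u r)
          + (m - 1) / m * s0 `^ (N%:R + al - 1) * `|du s0| `^ (m - 1) * (s0 * du s0 + (N%:R + al - m) / (m - 1) * u s0)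
          + lam / (p + 1) * (r `^ (N%:R + be) * u r `^ (p + 1) - s0 `^ (N%:R + be))
   = Phi N al be m lam p u du r - Phi N al be m lam p u du s0.
  by rewrite /Phi /Uf /rhoD us0 p1x; ring.
rewrite RHS ccE.
have [c0|c0] := eqVneq (cc N al be m lam p) 0.
  rewrite c0 mul0e (Phi_const_cc0 hN hm hA hB hlam hp hs0 sol sr c0).
  by rewrite subrr.
rewrite (int_eq hN hm hA hB hlam hp hs0 sol sr c0) -EFinM.
rewrite (Phi_Psi hN hm hA hB hlam hp hs0 sol sr).
by congr EFin; field.
Qed.
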